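(* Let $u:X\to\mathbb{R}$ be non-constant affine. Let $\succ_{HP}$ be a hope-and-prepare preference with unique representation $(u,C_{HP},D_{HP})$, $\succ_T$ a twofold multiprior preference with unique representation $(u,C_T,D_T)$, and $\succ_B$ a Bewley preference with unique representation $(u,C_B)$. Then: (i) $\succ_B$ is more conservative than $\succ_{HP}$ if and only if $C_{HP}\cup D_{HP}\subseteq C_B$; (ii) $\succ_T$ is more conservative than $\succ_{HP}$ if and only if $C_{HP}\subseteq C_T$ and $D_{HP}\subseteq D_T$.
   Context: $S$ is a set of states with algebra $\Sigma$; $X$ is a non-singleton convex subset of a real vector space; $\mathcal{F}$ is the set of simple acts $f:S\to X$ ($\Sigma$-measurable, finitely many values); $\Delta$ is the set of finitely additive probability measures on $(S,\Sigma)$ with weak* topology. A relation $\succ$ on $\mathcal{F}$ is a hope-and-prepare preference with representation $(u,C,D)$ ($C,D\subseteq\Delta$ convex compact, $C\cap D\ne\emptyset$) if $f\succ g$ iff $\min_{p\in C}\int u(f)dp>\min_{p\in C}\int u(g)dp$ and $\max_{p\in D}\int u(f)dp>\max_{p\in D}\int u(g)dp$. It is a twofold multiprior preference with representation $(u,C,D)$ ($C,D$ convex compact, $C\cap D\ne\emptyset$) if $f\succ g$ iff $\min_{p\in C}\int u(f)dp>\max_{p\in D}\int u(g)dp$. It is a Bewley preference with representation $(u,C)$ ($C$ non-empty convex compact) if $f\succ g$ iff $\int u(f)dp>\int u(g)dp$ for all $p\in C$. ''Unique representation'' means the sets are unique and $u$ is unique up to positive affine transformation. $\succ_1$ is more conservative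 than $\succ_2$ if $f\succ_1 g$ implies $f\succ_2 g$ for all $f,g\in\mathcal{F}$. *)

(* Defs.v *)
From HB Require Import structures.
From mathcomp Require Import all_boot all_order all_algebra.
From mathcomp Require Import boolp classical_sets functions cardinality fsbigop reals.
From mathcomp Require Import topology function_spaces normedtype.
Import numFieldNormedType.Exports.
Set Implicit Arguments. Unset Strict Implicit. Unset Printing Implicit Defensive.
Import Order.TTheory GRing.Theory Num.Theory.
Local Open Scope classical_set_scope.
Local Open Scope ring_scope.

Definition is_algebra {S : Type} (Sigma : set (set S)) : Prop :=
  Sigma setT /\ (forall A, Sigma A -> Sigma (~` A)) /\
  (forall A B, Sigma A -> Sigma B -> Sigma (A `|` B)).

Definition convex_subset {R : realType} {V : lmodType R} (X : set V) : Prop :=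
  forall (x y : V) (t : R), X x -> X y -> 0 <= t <= 1 -> X (t *: x + (1 - t) *: y).

Definition non_singleton {T : Type} (X : set T) : Prop :=
  exists x y, X x /\ X y /\ x <> y.

Definition affine_on {R : realType} {V : lmodType R} (X : set V) (u : V -> R) : Prop :=
  forall (x y : V) (t : R), X x -> X y -> 0 <= t <= 1 ->
    u (t *: x + (1 - t) *: y) = t * u x + (1 - t) * u y.

Definition nonconstant_on {R : realType} {V : lmodType R} (X : set V) (u : V -> R) : Prop :=
  exists x y, X x /\ X y /\ u x <> u y.

Definition simple_act {R : realType} {S : Type} {V : lmodType R}
  (Sigma : set (set S)) (X : set V) (f : S -> V) : Prop :=
  (forall s, X (f s)) /\ finite_set (range f) /\ (forall v, Sigma (f @^-1` [set v])).

(* Finitely additive probability measures on (S, Sigma); by convention a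
   measure is the function A |-> p A on Sigma, extended by 0 outside Sigma. *)
Definition fa_prob {R : realType} {S : Type} (Sigma : set (set S)) (p : set S -> R) : Prop :=
  (forall A, ~ Sigma A -> p A = 0) /\
  (forall A, Sigma A -> 0 <= p A) /\
  p setT = 1 /\
  (forall A B, Sigma A -> Sigma B -> A `&` B = set0 -> p (A `|` B) = p A + p B).

Definition sint {R : realType} {S : Type} (p : set S -> R) (h : S -> R) : R :=
  (\sum_(y \in range h) y * p (h @^-1` [set y]))%R.

Definition convex_meas {R : realType} {S : Type} (C : set (set S -> R)) : Prop :=
  forall p q (t : R), C p -> C q -> 0 <= t <= 1 ->
    C (fun A => t * p A + (1 - t) * q A).

(* Weak* topology on Delta = topology of setwise convergence on Sigma,
   i.e. the product (pointwise) topology on set S -> R restricted to Delta. *)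
Definition prior_set {R : realType} {S : Type} (Sigma : set (set S))
  (C : set (set S -> R)) : Prop :=
  C `<=` fa_prob Sigma /\ convex_meas C /\ compact (C : set {ptws set S -> R}).

Definition minE {R : realType} {S : Type} (C : set (set S -> R)) (h : S -> R) : R :=
  inf [set sint p h | p in C].
Definition maxE {R : realType} {S : Type} (C : set (set S -> R)) (h : S -> R) : R :=
  sup [set sint p h | p in C].

Definition pref (S : Type) (V : Type) := (S -> V) -> (S -> V) -> Prop.

Definition HP_rep {R : realType} {S : Type} {V : lmodType R}
  (Sigma : set (set S)) (X : set V) (pr : pref S V)
  (u : V -> R) (C D : set (set S -> R)) : Prop :=
  affine_on X u /\ prior_set Sigma C /\ prior_set Sigma D /\ (C `&` D !=set0) /\
  forall f g, simple_act Sigma X f -> simple_act Sigma X g ->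
    (pr f g <-> (minE C (u \o f) > minE C (u \o g) /\ maxE D (u \o f) > maxE D (u \o g))).

Definition T_rep {R : realType} {S : Type} {V : lmodType R}
  (Sigma : set (set S)) (X : set V) (pr : pref S V)
  (u : V -> R) (C D : set (set S -> R)) : Prop :=
  affine_on X u /\ prior_set Sigma C /\ prior_set Sigma D /\ (C `&` D !=set0) /\
  forall f g, simple_act Sigma X f -> simple_act Sigma X g ->
    (pr f g <-> minE C (u \o f) > maxE D (u \o g)).

Definition B_rep {R : realType} {S : Type} {V : lmodType R}
  (Sigma : set (set S)) (X : set V) (pr : pref S V)
  (u : V -> R) (C : set (set S -> R)) : Prop :=
  affine_on X u /\ prior_set Sigma C /\ (C !=set0) /\
  forall f g, simple_act Sigma X f -> simple_act Sigma X g ->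
    (pr f g <-> forall p, C p -> sint p (u \o f) > sint p (u \o g)).

Definition pos_affine_transf {R : realType} {V : lmodType R} (X : set V) (u u' : V -> R) : Prop :=
  exists a b : R, 0 < a /\ forall x, X x -> u' x = a * u x + b.

Definition unique_HP_rep {R : realType} {S : Type} {V : lmodType R}
  (Sigma : set (set S)) (X : set V) (pr : pref S V)
  (u : V -> R) (C D : set (set S -> R)) : Prop :=
  HP_rep Sigma X pr u C D /\
  forall u' C' D', HP_rep Sigma X pr u' C' D' ->
    C' = C /\ D' = D /\ pos_affine_transf X u u'.

Definition unique_T_rep {R : realType} {S : Type} {V : lmodType R}
  (Sigma : set (set S)) (X : set V) (pr : pref S V)
  (u : V -> R) (C D : set (set S -> R)) : Prop :=
  T_rep Sigma X pr u C D /\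
  forall u' C' D', T_rep Sigma X pr u' C' D' ->
    C' = C /\ D' = D /\ pos_affine_transf X u u'.

Definition unique_B_rep {R : realType} {S : Type} {V : lmodType R}
  (Sigma : set (set S)) (X : set V) (pr : pref S V)
  (u : V -> R) (C : set (set S -> R)) : Prop :=
  B_rep Sigma X pr u C /\
  forall u' C', B_rep Sigma X pr u' C' ->
    C' = C /\ pos_affine_transf X u u'.

Definition more_conservative {R : realType} {S : Type} {V : lmodType R}
  (Sigma : set (set S)) (X : set V) (pr1 pr2 : pref S V) : Prop :=
  forall f g, simple_act Sigma X f -> simple_act Sigma X g -> pr1 f g -> pr2 f g.

(* Main.v *)
Require Import Defs.
From HB Require Import structures.
From mathcomp Require Import all_boot all_order all_algebra.
From mathcomp Require Import boolp classical_sets functions cardinality fsbigop reals.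
From mathcomp Require Import topology function_spaces normedtype.
From mathcomp Require derive.
From mathcomp Require Import lra.
Import numFieldNormedType.Exports.
Import Order.TTheory GRing.Theory Num.Theory.
Local Open Scope classical_set_scope.
Local Open Scope ring_scope.
From mathcomp Require Import finmap ring.
Set Implicit Arguments. Unset Strict Implicit. Unset Printing Implicit Defensive.

Lemma eval_cont (R : realType) (S : Type) (A : set S) :
  continuous (fun q : {ptws set S -> R} => q A).
Proof. exact: (@proj_continuous (set S) (fun _ => R) A). Qed.

Lemma alg_set0 S (Sigma : set (set S)) : is_algebra Sigma -> Sigma set0.
Proof. by move=> [hT [hC hU]]; rewrite -setCT; exact: hC. Qed.

Lemma alg_setI S (Sigma : set (set S)) : is_algebra Sigma ->
  forall A B, Sigma A -> Sigma B -> Sigma (A `&` B).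
Proof.
move=> [hT [hC hU]] A B hA hB; rewrite -[A `&` B]setCK setCI.
by apply/hC/hU; exact: hC.
Qed.

Lemma alg_bigU S (Sigma : set (set S)) (I : eqType) (r : seq I) (B : I -> set S) :
  is_algebra Sigma -> (forall i, Sigma (B i)) ->
  Sigma [set s | exists2 i, i \in r & B i s].
Proof.
move=> hS hB; elim: r => [|a r IH].
  have -> : [set s | exists2 i, i \in [::] & B i s] = set0.
    by apply/seteqP; split => s //= [].
  exact: alg_set0.
have -> : [set s | exists2 i, i \in a :: r & B i s] =
    B a `|` [set s | exists2 i, i \in r & B i s].
  apply/seteqP; split => s /=.
  - move=> [i]; rewrite inE => /orP[/eqP -> ? | ir ?]; [by left | by right; exists i].
  - case=> [?|[i ir ?]]; first by exists a; rewrite ?inE ?eqxx.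
    by exists i; rewrite // inE ir orbT.
by case: hS => _ [_ hU]; apply: hU.
Qed.

Lemma alg_bigI S (Sigma : set (set S)) (I : eqType) (r : seq I) (B : I -> set S) :
  is_algebra Sigma -> (forall i, Sigma (B i)) ->
  Sigma [set s | forall i, i \in r -> B i s].
Proof.
move=> hS hB; elim: r => [|a r IH].
  have -> : [set s | forall i, i \in [::] -> B i s] = setT.
    by apply/seteqP; split => s //= _ i.
  by case: hS.
have -> : [set s | forall i, i \in a :: r -> B i s] =
    B a `&` [set s | forall i, i \in r -> B i s].
  apply/seteqP; split => s /=.
  - move=> H; split; first by apply: H; rewrite inE eqxx.
    by move=> i ir; apply: H; rewrite inE ir orbT.
  - by move=> [Ba Hr] i; rewrite inE => /orP[/eqP ->|/Hr].
exact: alg_setI.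
Qed.

Lemma fp_set0 (R : realType) S (Sigma : set (set S)) (q : set S -> R) :
  is_algebra Sigma -> fa_prob Sigma q -> q set0 = 0.
Proof.
move=> hS [_ [_ [_ hadd]]].
have h0 := alg_set0 hS.
have := hadd set0 set0 h0 h0 (setI0 _); rewrite setU0 => H; lra.
Qed.

Lemma fp_ge0 (R : realType) S (Sigma : set (set S)) (q : set S -> R) :
  fa_prob Sigma q -> forall A, 0 <= q A.
Proof.
move=> [h0 [hge _]] A; have [hA|hA] := pselect (Sigma A); first exact: hge.
by rewrite h0.
Qed.

Lemma fp_bigU (R : realType) S (Sigma : set (set S)) (q : set S -> R) (I : eqType) (r : seq I)
  (B : I -> set S) :
  is_algebra Sigma -> fa_prob Sigma q -> uniq r -> (forall i, Sigma (B i)) ->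
  (forall i j s, B i s -> B j s -> i = j) ->
  q [set s | exists2 i, i \in r & B i s] = \sum_(i <- r) q (B i).
Proof.
move=> hS hq; elim: r => [|a r IH] ur hB hd.
  have -> : [set s | exists2 i, i \in [::] & B i s] = set0.
    by apply/seteqP; split => s //= [].
  by rewrite big_nil (fp_set0 hS hq).
move: ur => /= /andP[ar ur].
have -> : [set s | exists2 i, i \in a :: r & B i s] =
    B a `|` [set s | exists2 i, i \in r & B i s].
  apply/seteqP; split => s /=.
  - move=> [i]; rewrite inE => /orP[/eqP -> ? | ir ?]; [by left | by right; exists i].
  - case=> [?|[i ir ?]]; first by exists a; rewrite ?inE ?eqxx.
    by exists i; rewrite // inE ir orbT.
case: hq => [_ [_ [_ hadd]]].
rewrite big_cons hadd //; first by rewrite IH.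
- exact: alg_bigU.
- apply/seteqP; split => s //= [Bas [i ir Bis]].
  by move: ar; rewrite (hd _ _ _ Bas Bis) ir.
Qed.

Definition part S (Sigma : set (set S)) (I : finType) (B : I -> set S) :=
  (forall i, Sigma (B i)) /\ (forall s, exists i, B i s) /\
  (forall i j s, B i s -> B j s -> i = j).

Lemma fp_sum_pred (R : realType) S (Sigma : set (set S)) (q : set S -> R) (I : finType)
  (B : I -> set S) (P : pred I) :
  is_algebra Sigma -> fa_prob Sigma q -> part Sigma B ->
  q [set s | exists i, P i /\ B i s] = \sum_(i | P i) q (B i).
Proof.
move=> hS hq [hB [_ hd]].
rewrite -big_filter -(@fp_bigU R S Sigma q _ _ B hS hq) //; last exact/filter_uniq/index_enum_uniq.
congr q; apply/seteqP; split => s /=.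
- by move=> [i [Pi Bi]]; exists i; rewrite // mem_filter Pi mem_index_enum.
- by move=> [i]; rewrite mem_filter => /andP[Pi _] Bi; exists i.
Qed.

Lemma fp_sum1 (R : realType) S (Sigma : set (set S)) (q : set S -> R) (I : finType)
  (B : I -> set S) :
  is_algebra Sigma -> fa_prob Sigma q -> part Sigma B ->
  \sum_i q (B i) = 1.
Proof.
move=> hS hq hp.
rewrite -(fp_sum_pred _ hS hq hp).
have -> : [set s | exists i, true /\ B i s] = setT.
  apply/seteqP; split => s // _; case: hp => _ [hc _].
  by have [i ?] := hc s; exists i.
by case: hq => [_ [_ []]].
Qed.

Lemma sint_atomic (R : realType) S (Sigma : set (set S)) (q : set S -> R) (I : finType)
  (B : I -> set S) (v : I -> R) (h : S -> R) :
  is_algebra Sigma -> fa_prob Sigma q -> part Sigma B ->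
  (forall i s, B i s -> h s = v i) ->
  sint q h = \sum_i v i * q (B i).
Proof.
move=> hS hq hp hv; have [hB [hcov hdis]] := hp.
have fin : finite_set (range h).
  apply: (sub_finite_set _ (finite_image v (@finite_finset I setT))).
  move=> y [s _ <-]; have [i Bi] := hcov s; exists i => //; by rewrite (hv i s Bi).
rewrite /sint fsbig_finite //=.
have pre : forall y, q (h @^-1` [set y]) = \sum_(i | v i == y) q (B i).
  move=> y; rewrite -(fp_sum_pred _ hS hq hp); congr q; apply/seteqP; split => s /=.
  - move=> hs; have [i Bi] := hcov s; exists i; split => //.
    by rewrite -(hv i s Bi) hs.
  - by move=> [i [/eqP <- Bi]]; rewrite (hv i s Bi).
have ur := finmap.fset_uniq (fset_set (range h)).
set r := finmap.enum_fset _ in ur *.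
transitivity (\sum_(y <- r) \sum_i (if v i == y then v i * q (B i) else 0)).
  apply: eq_bigr => y _; rewrite pre mulr_sumr big_mkcond /=.
  by apply: eq_bigr => i _; case: eqP => // ->.
rewrite exchange_big /=; apply: eq_bigr => i _.
have [[s Bis]|Bi0] := pselect (exists s, B i s).
  have vir : v i \in r.
    rewrite /r (in_fset_set fin); apply/mem_set; exists s => //; exact: hv.
  rewrite (big_rem (v i)) //= eqxx big1_seq ?addr0 // => y /andP[_ yr].
  case: eqP => // eq; move: yr; rewrite -eq mem_rem_uniqF //.
have -> : B i = set0 by apply/seteqP; split => s //= Bis; apply: Bi0; exists s.
rewrite (fp_set0 hS hq) mulr0; apply: big1 => y _; by case: ifP.
Qed.

Lemma sint_cont (R : realType) S (h : S -> R) : finite_set (range h) ->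
  continuous (fun q : {ptws set S -> R} => sint q h).
Proof.
move=> fin; rewrite /sint.
have -> : (fun q : {ptws set S -> R} => \sum_(y \in range h) y * q (h @^-1` [set y])) =
   (fun q => \sum_(y <- finmap.enum_fset (fset_set (range h))) y * q (h @^-1` [set y])).
  by apply: funext => q; rewrite fsbig_finite.
elim: (finmap.enum_fset _) => [|a r IH].
  have -> : (fun q : {ptws set S -> R} => \sum_(y <- [::]) y * q (h @^-1` [set y])) =
     (fun _ => 0) by apply: funext => q; rewrite big_nil.
  exact: cst_continuous.
have -> : (fun q : {ptws set S -> R} => \sum_(y <- a :: r) y * q (h @^-1` [set y])) =
     (fun q => a * q (h @^-1` [set a]) + \sum_(y <- r) y * q (h @^-1` [set y])).
  by apply: funext => q; rewrite big_cons.
move=> x.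
have h1 : continuous (fun q : {ptws set S -> R} => a * q (h @^-1` [set a])).
  move=> y; apply: (@continuousM R _ (fun=> a) (fun q : {ptws set S -> R} => q (h @^-1` [set a]))).
    exact: cst_continuous.
  exact: eval_cont.
exact: (@continuousD R R^o _ _ _ x (h1 x) (IH x)).
Qed.

Lemma attain_min (R : realType) S (K : set (set S -> R)) (F : (set S -> R) -> R) :
  K !=set0 -> compact (K : set {ptws set S -> R}) ->
  continuous (F : {ptws set S -> R} -> R) ->
  exists2 q0, K q0 & forall q, K q -> F q0 <= F q.
Proof.
move=> hne hc hF.
have [q0 hq0 hmin] := @derive.compact_EVT_min {ptws set S -> R} R F K hne hc (continuous_subspaceT hF).
exists q0; first exact: set_mem hq0.
by move=> q Kq; apply: hmin; exact: mem_set.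
Qed.

Lemma attain_max (R : realType) S (K : set (set S -> R)) (F : (set S -> R) -> R) :
  K !=set0 -> compact (K : set {ptws set S -> R}) ->
  continuous (F : {ptws set S -> R} -> R) ->
  exists2 q0, K q0 & forall q, K q -> F q <= F q0.
Proof.
move=> hne hc hF.
have [q0 hq0 hmin] := @derive.compact_EVT_max {ptws set S -> R} R F K hne hc (continuous_subspaceT hF).
exists q0; first exact: set_mem hq0.
by move=> q Kq; apply: hmin; exact: mem_set.
Qed.

Lemma minE_attain (R : realType) S (Sigma : set (set S)) (K : set (set S -> R)) (h : S -> R) :
  prior_set Sigma K -> K !=set0 -> finite_set (range h) ->
  exists2 q0, K q0 & (minE K h = sint q0 h /\ forall q, K q -> minE K h <= sint q h).
Proof.
move=> [_ [_ hc]] hne fin.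
have [q0 Kq0 hmin] := attain_min hne hc (sint_cont fin).
have E : minE K h = sint q0 h.
  rewrite /minE; apply/le_anti/andP; split.
  - apply: ge_inf; last by exists q0.
    by exists (sint q0 h) => _ [q Kq <-]; exact: hmin.
  - by apply: lb_le_inf; [exists (sint q0 h), q0 | move=> _ [q Kq <-]; exact: hmin].
by exists q0 => //; split => // q Kq; rewrite E; exact: hmin.
Qed.

Lemma maxE_attain (R : realType) S (Sigma : set (set S)) (K : set (set S -> R)) (h : S -> R) :
  prior_set Sigma K -> K !=set0 -> finite_set (range h) ->
  exists2 q0, K q0 & (maxE K h = sint q0 h /\ forall q, K q -> sint q h <= maxE K h).
Proof.
move=> [_ [_ hc]] hne fin.
have [q0 Kq0 hmax] := attain_max hne hc (sint_cont fin).
have E : maxE K h = sint q0 h.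
  rewrite /maxE; apply/le_anti/andP; split.
  - by apply: ge_sup; [exists (sint q0 h), q0 | move=> _ [q Kq <-]; exact: hmax].
  - apply: sup_upper_bound; last by exists q0.
    split; first by exists (sint q0 h), q0.
    by exists (sint q0 h) => _ [q Kq <-]; exact: hmax.
by exists q0 => //; split => // q Kq; rewrite E; exact: hmax.
Qed.

Lemma act_atomic (R : realType) S (Sigma : set (set S)) (V : lmodType R) (X : set V)
  (u : V -> R) (x0 y0 : V) (I : finType) (B : I -> set S) (v : I -> R) :
  is_algebra Sigma -> convex_subset X -> affine_on X u -> X x0 -> X y0 ->
  part Sigma B -> (forall i, 0 <= v i <= 1) ->
  exists f, simple_act Sigma X f /\ forall q, fa_prob Sigma q ->
    sint q (u \o f) = u x0 + (u y0 - u x0) * \sum_i v i * q (B i).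
Proof.
move=> hS hXc hu Xx0 Xy0 hp hv01; have [hB [hcov hdis]] := hp.
pose w s := \sum_i (if `[< B i s >] then v i else 0).
have wB : forall i s, B i s -> w s = v i.
  move=> i s Bis; rewrite /w (bigD1 i) //= asboolT // big1 ?addr0 // => j ji.
  rewrite asboolF // => Bjs; move/eqP: ji; apply; exact: hdis Bjs Bis.
pose g i := v i *: y0 + (1 - v i) *: x0.
pose f s := w s *: y0 + (1 - w s) *: x0.
have fB : forall i s, B i s -> f s = g i by move=> i s Bis; rewrite /f (wB i s Bis).
exists f; split.
  split; [|split].
  - move=> s; have [i Bis] := hcov s; rewrite (fB i s Bis); exact: hXc.
  - apply: (sub_finite_set _ (finite_image g (@finite_finset I setT))).
    move=> z [s _ <-]; have [i Bi] := hcov s; exists i => //; by rewrite (fB i s Bi).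
  - move=> z.
    have -> : f @^-1` [set z] =
        [set s | exists2 i, i \in [seq i <- index_enum I | g i == z] & B i s].
      apply/seteqP; split => s /=.
      + move=> fsz; have [i Bi] := hcov s; exists i => //.
        by rewrite mem_filter mem_index_enum andbT -(fB i s Bi) fsz eqxx.
      + by move=> [i]; rewrite mem_filter => /andP[/eqP <- _] Bi; rewrite (fB i s Bi).
    exact: alg_bigU.
move=> q hq.
rewrite (@sint_atomic R S Sigma q I B (fun i => u x0 + (u y0 - u x0) * v i)) //.
  transitivity (u x0 * \sum_i q (B i) + (u y0 - u x0) * \sum_i v i * q (B i));
    last by rewrite (fp_sum1 hS hq hp) mulr1.
  rewrite !mulr_sumr -big_split; apply: eq_bigr => i _ /=; lra.
move=> i s Bis /=; rewrite (fB i s Bis) /g hu //; first lra.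
Qed.

HB.instance Definition _ (S : Type) (R : realType) :=
  isPointed.Build {ptws set S -> R} (fun _ => 0).

Lemma cont_sum (R : realType) (T : topologicalType) (I : Type) (r : seq I)
  (G : I -> T -> R) :
  (forall j, continuous (G j)) -> continuous (fun x => \sum_(j <- r) G j x).
Proof.
move=> hG; elim: r => [|a r IH].
  have -> : (fun x => \sum_(j <- [::]) G j x) = (fun _ => 0).
    by apply: funext => x; rewrite big_nil.
  exact: cst_continuous.
have -> : (fun x => \sum_(j <- a :: r) G j x) = (fun x => G a x + \sum_(j <- r) G j x).
  by apply: funext => x; rewrite big_cons.
move=> x; exact: (@continuousD R R^o _ _ _ x (hG a x) (IH x)).
Qed.

Lemma separation (R : realType) S (Sigma : set (set S)) (K : set (set S -> R))
  (p : set S -> R) :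
  is_algebra Sigma -> prior_set Sigma K -> K !=set0 -> fa_prob Sigma p -> ~ K p ->
  exists (I : finType) (B : I -> set S) (v : I -> R) (d : R),
    [/\ part Sigma B, (forall i, 0 <= v i <= 1), 0 < d &
     forall q, K q -> \sum_i v i * p (B i) + d <= \sum_i v i * q (B i)].
Proof.
move=> hS hK hne hp nKp; have [hKfa [hKconv hKc]] := hK.
have : forall q, exists A, K q -> Sigma A /\ p A != q A.
  move=> q; have [Kq|nKq] := pselect (K q); last by exists set0.
  have [A hA] : exists A, p A != q A.
    apply: contrapT => H; apply: nKp.
    suff -> : p = q by [].
    apply: funext => A; apply: contrapT => hne'; apply: H; exists A; exact/eqP.
  exists A => _; split => //.
  apply: contrapT => nSA; move: hA.
  have [hq0 _] := hKfa q Kq; have [hp0 _] := hp.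
  by rewrite hq0 // hp0 // eqxx.
move=> /choice [Af hAf].
pose U q := [set r : set S -> R | r (Af q) != p (Af q)].
have hop : forall q, K q -> open (U q : set {ptws set S -> R}).
  move=> q _.
  apply: (@open_comp _ _ (fun r : {ptws set S -> R} => r (Af q)) [set x | x != p (Af q)]).
    by move=> x _; exact: eval_cont.
  exact: open_neq.
have hcov : K `<=` cover K U.
  move=> q Kq; exists q => //; rewrite /U /=; have [_] := hAf q Kq; by rewrite eq_sym.
have hc : cover_compact (K : set {ptws set S -> R}).
  by move: hKc; rewrite (@compact_cover {ptws set S -> R}).
have [D' subD cov] := hc _ K U hop hcov.
pose r := (D' : seq _).
pose n := size r.
have [q1 Kq1] := hne.
pose A (j : 'I_n) := Af (nth q1 r j).
have KA : forall j : 'I_n, K (nth q1 r j).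
  move=> j; apply: set_mem; apply: subD; exact: mem_nth.
have hAS : forall j, Sigma (A j) by move=> j; have [] := hAf _ (KA j).
pose C (σ : {ffun 'I_n -> bool}) (j : 'I_n) := if σ j then A j else ~` A j.
pose B (σ : {ffun 'I_n -> bool}) := [set s | forall j, C σ j s].
pose sig (s : S) : {ffun 'I_n -> bool} := [ffun j => `[< A j s >]].
have Bsig : forall s, B (sig s) s.
  move=> s j; rewrite /C /sig ffunE; by case: (asboolP (A j s)).
have Buniq : forall σ τ s, B σ s -> B τ s -> σ = τ.
  move=> σ τ s Hs Ht; apply/ffunP => j; have := Hs j; have := Ht j; rewrite /C.
  by case: (σ j); case: (τ j) => //= a b; exfalso; first [exact: (a b) | exact: (b a)].
have hpart : part Sigma B.
  split; [|split].
  - move=> σ.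
    have -> : B σ = [set s | forall j, j \in index_enum 'I_n -> C σ j s].
      by apply/seteqP; split => s /= H j //; apply: H; rewrite mem_index_enum.
    apply: alg_bigI => // j; rewrite /C; case: (σ j) => //.
    by case: hS => _ [hC _]; apply: hC.
  - by move=> s; exists (sig s).
  - by move=> σ τ s; exact: Buniq.
pose F (q : set S -> R) := \sum_(j < n) (q (A j) - p (A j)) * (q (A j) - p (A j)).
have Fc : continuous (F : {ptws set S -> R} -> R).
  apply: cont_sum => j x.
  have e1 : continuous (fun q : {ptws set S -> R} => q (A j)) := @eval_cont R S (A j).
  have e2 : continuous (fun _ : {ptws set S -> R} => - p (A j)) := @cst_continuous {ptws set S -> R} R (- p (A j)).
  have h1 : {for x, continuous (fun q : {ptws set S -> R} => q (A j) - p (A j))}.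
    exact: (@continuousD R R^o _ _ _ x (e1 x) (e2 x)).
  exact: (@continuousM R _ _ _ x h1 h1).
have [q0 Kq0 hmin] := attain_min hne hKc Fc.
have F0 : 0 < F q0.
  have [i iD Ui] := cov q0 Kq0.
  have ir : i \in r by [].
  have hj0 : (index i r < n)%N by rewrite index_mem.
  rewrite /F (bigD1 (Ordinal hj0)) //=.
  have -> : A (Ordinal hj0) = Af i by rewrite /A /= nth_index.
  have : 0 < (q0 (Af i) - p (Af i)) * (q0 (Af i) - p (Af i)).
    by rewrite -expr2 exprn_even_gt0 //= subr_eq0.
  have : 0 <= \sum_(j < n | j != Ordinal hj0)
      (q0 (A j) - p (A j)) * (q0 (A j) - p (A j)).
    by apply: sumr_ge0 => j _; rewrite -expr2 sqr_ge0.
  lra.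
pose c j := q0 (A j) - p (A j).
pose L (q : set S -> R) := \sum_(j < n) c j * q (A j).
have hL : forall q, K q -> L p + F q0 <= L q.
  move=> q Kq.
  pose a j := q (A j) - q0 (A j).
  pose X := \sum_(j < n) c j * a j.
  pose Y := \sum_(j < n) a j * a j.
  have hY : 0 <= Y by apply: sumr_ge0 => j _; rewrite -expr2 sqr_ge0.
  have key : forall t, 0 < t -> t <= 1 -> 0 <= 2 * X + t * Y.
    move=> t t0 t1; pose qt := fun E => t * q E + (1 - t) * q0 E.
    have Kqt : K qt by apply: hKconv => //; apply/andP; split; lra.
    have := hmin qt Kqt.
    have e : F qt - F q0 = t * (2 * X + t * Y).
      have -> : 2 * X + t * Y = \sum_(j < n) (2 * (c j * a j) + t * (a j * a j)).
        by rewrite big_split /= !mulr_sumr.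
      rewrite mulr_sumr /F -sumrB; apply: eq_bigr => j _; rewrite /qt /c /a /=; ring.
    move=> hle; have : 0 <= t * (2 * X + t * Y) by rewrite -e subr_ge0.
    nra.
  have hX : 0 <= X.
    rewrite leNgt; apply/negP => hXneg.
    pose t := Num.min 1 (- X / (Y + 1)).
    have t0 : 0 < t by rewrite lt_min ltr01 divr_gt0 //; lra.
    have t1 : t <= 1 by rewrite ge_min lexx.
    have tY : t * (Y + 1) <= - X.
      rewrite -ler_pdivlMr; last lra.
      by rewrite ge_min lexx orbT.
    have := key t t0 t1.
    rewrite mulrDr mulr1 in tY; lra.
  have : L q - L p = X + F q0.
    rewrite /L /X /F -sumrB -big_split; apply: eq_bigr => j _; rewrite /c /a /=; ring.
  lra.
pose val (σ : {ffun 'I_n -> bool}) := \sum_(j < n) c j * (σ j)%:R.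
have hE : forall q, fa_prob Sigma q -> \sum_(σ : {ffun 'I_n -> bool}) val σ * q (B σ) = L q.
  move=> q hq.
  transitivity (\sum_(σ : {ffun 'I_n -> bool}) \sum_(j < n) c j * ((σ j)%:R * q (B σ))).
    by apply: eq_bigr => σ _; rewrite mulr_suml; apply: eq_bigr => j _; rewrite mulrA.
  rewrite exchange_big /=; apply: eq_bigr => j _; rewrite -mulr_sumr; congr (_ * _).
  transitivity (\sum_(σ : {ffun 'I_n -> bool} | σ j) q (B σ)).
    rewrite [RHS]big_mkcond /=; apply: eq_bigr => σ _; case: (σ j) => /=.
    - by rewrite mul1r.
    - by rewrite mul0r.
  rewrite -(fp_sum_pred _ hS hq hpart); congr q; apply/seteqP; split => s /=.
  - move=> [σ [σj Bs]]; have := Bs j; by rewrite /C σj.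
  - move=> Ajs; exists (sig s); split => //; rewrite /sig ffunE; exact/asboolP.
pose M := \sum_(j < n) `|c j|.
have M0 : 0 <= M by apply: sumr_ge0 => j _; exact: normr_ge0.
have hval : forall σ, - M <= val σ <= M.
  move=> σ; rewrite -ler_norml; apply: le_trans (ler_norm_sum _ _ _) _.
  apply: ler_sum => j _; rewrite normrM; case: (σ j) => /=.
  - by rewrite normr1 mulr1.
  - by rewrite normr0 mulr0.
pose k := (2 * M + 1)^-1.
have k0 : 0 < k by rewrite invr_gt0; lra.
exists {ffun 'I_n -> bool}, B, (fun σ => (val σ + M) * k), (k * F q0).
have hEk : forall q, fa_prob Sigma q ->
    \sum_(σ : {ffun 'I_n -> bool}) (val σ + M) * k * q (B σ) = k * (L q + M).
  move=> q hq; rewrite -(hE q hq).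
  transitivity (k * (\sum_(σ : {ffun 'I_n -> bool}) val σ * q (B σ) + M * \sum_(σ : {ffun 'I_n -> bool}) q (B σ))).
    rewrite mulr_sumr -big_split /= mulr_sumr; apply: eq_bigr => σ _; ring.
  by rewrite (fp_sum1 hS hq hpart) mulr1.
split => //.
- move=> σ; have := hval σ => /andP[h1 h2]; apply/andP; split.
  + apply: mulr_ge0; [lra | exact: ltW].
  + rewrite ler_pdivrMr; [lra | lra].
- exact: mulr_gt0.
- move=> q Kq; rewrite (hEk p hp) (hEk q (hKfa q Kq)) -mulrDr.
  have := hL q Kq; nra.
Qed.

Lemma act_const (R : realType) S (Sigma : set (set S)) (V : lmodType R) (X : set V)
  (u : V -> R) (x0 y0 : V) (c : R) :
  is_algebra Sigma -> convex_subset X -> affine_on X u -> X x0 -> X y0 ->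
  0 <= c <= 1 ->
  exists f, simple_act Sigma X f /\ forall q, fa_prob Sigma q ->
    sint q (u \o f) = u x0 + (u y0 - u x0) * c.
Proof.
move=> hS hXc hu Xx0 Xy0 hc.
have hp : part Sigma (fun _ : 'I_1 => setT).
  split; [|split].
  - by move=> _; case: hS.
  - by move=> s; exists ord0.
  - by move=> i j s _ _; rewrite (ord1 i) (ord1 j).
have [f [hf hq]] := @act_atomic R S Sigma V X u x0 y0 'I_1 (fun _ => setT) (fun _ => c) hS hXc hu Xx0 Xy0 hp (fun _ => hc).
exists f; split => // q fq; rewrite hq // big_ord1.
by have [_ [_ [-> _]]] := fq; rewrite mulr1.
Qed.

Lemma act_flip (R : realType) S (Sigma : set (set S)) (V : lmodType R) (X : set V)
  (u : V -> R) (x0 y0 : V) (I : finType) (B : I -> set S) (v : I -> R) :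
  is_algebra Sigma -> convex_subset X -> affine_on X u -> X x0 -> X y0 ->
  part Sigma B -> (forall i, 0 <= v i <= 1) ->
  exists f, simple_act Sigma X f /\ forall q, fa_prob Sigma q ->
    sint q (u \o f) = u x0 + (u y0 - u x0) * (1 - \sum_i v i * q (B i)).
Proof.
move=> hS hXc hu Xx0 Xy0 hp hv.
have hv' : forall i, 0 <= 1 - v i <= 1.
  by move=> i; have /andP[? ?] := hv i; apply/andP; split; lra.
have [f [hf hq]] := @act_atomic R S Sigma V X u x0 y0 I B (fun i => 1 - v i) hS hXc hu Xx0 Xy0 hp hv'.
exists f; split => // q fq; rewrite hq //; congr (_ + _ * _).
rewrite -[in RHS](fp_sum1 hS fq hp) -sumrB; apply: eq_bigr => i _; ring.
Qed.

Lemma Ep_bounds (R : realType) S (Sigma : set (set S)) (q : set S -> R)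
  (I : finType) (B : I -> set S) (v : I -> R) :
  is_algebra Sigma -> fa_prob Sigma q -> part Sigma B -> (forall i, 0 <= v i <= 1) ->
  0 <= \sum_i v i * q (B i) <= 1.
Proof.
move=> hS hq hp hv; apply/andP; split.
  apply: sumr_ge0 => i _; apply: mulr_ge0; first by case/andP: (hv i).
  exact: (fp_ge0 hq).
rewrite -(fp_sum1 hS hq hp); apply: ler_sum => i _.
have := fp_ge0 hq (B i); have /andP[? ?] := hv i; nra.
Qed.

Theorem proposition1 (R : realType) (S : Type) (Sigma : set (set S))
  (hSigma : is_algebra Sigma)
  (V : lmodType R) (X : set V) (hXc : convex_subset X) (hXns : non_singleton X)
  (u : V -> R) (hu : affine_on X u) (hunc : nonconstant_on X u)
  (prHP prT prB : pref S V)
  (CHP DHP CT DT CB : set (set S -> R))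
  (hHP : unique_HP_rep Sigma X prHP u CHP DHP)
  (hT : unique_T_rep Sigma X prT u CT DT)
  (hB : unique_B_rep Sigma X prB u CB) :
  (more_conservative Sigma X prB prHP <-> CHP `|` DHP `<=` CB) /\
  (more_conservative Sigma X prT prHP <-> (CHP `<=` CT /\ DHP `<=` DT)).
Proof.
have [[_ [hCHP [hDHP [hCDHP hHPiff]]]] _] := hHP.
have [r [rC rD]] := hCDHP.
have [[_ [hCT [hDT [hCDT hTiff]]]] _] := hT.
have [r' [r'C r'D]] := hCDT.
have [[_ [hCB [hCBne hBiff]]] _] := hB.
have CHPne : CHP !=set0 by exists r.
have DHPne : DHP !=set0 by exists r.
have CTne : CT !=set0 by exists r'.
have DTne : DT !=set0 by exists r'.
have [x0 [y0 [Xx0 [Xy0 ult]]]] : exists x0 y0, X x0 /\ X y0 /\ u x0 < u y0.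
  have [x [y [Xx [Xy uxy]]]] := hunc.
  have [h|h] : u x < u y \/ u y < u x.
    by move/eqP: uxy; rewrite neq_lt => /orP[]; [left|right].
  - by exists x, y.
  - by exists y, x.
pose D := u y0 - u x0.
have D0 : 0 < D by rewrite /D subr_gt0.
have finr : forall f, simple_act Sigma X f -> finite_set (range (u \o f)).
  move=> f [_ [hfin _]]; apply: (sub_finite_set _ (finite_image u hfin)).
  by move=> z [s _ <-]; exists (f s).
have faK : forall K : set (set S -> R), prior_set Sigma K -> forall q, K q -> fa_prob Sigma q.
  move=> K; rewrite /prior_set => -[hK _] q Kq; exact: hK.
split; split.
-
  move=> hmc p Hp; apply: contrapT => npB.
  have fap : fa_prob Sigma p by case: Hp => Hp; [exact: faK hCHP p Hp | exact: faK hDHP p Hp].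
  have [I [B [v [d [hpart hv01 d0 hsep]]]]] := separation hSigma hCB hCBne fap npB.
  pose Ep q := \sum_i v i * q (B i).
  have [q1 q1B] := hCBne.
  have Epb : forall q, fa_prob Sigma q -> 0 <= Ep q <= 1.
    by move=> q fq; exact: (Ep_bounds hSigma fq hpart hv01).
  pose c := Ep p + d / 2.
  have hc : 0 <= c <= 1.
    have := Epb p fap; have := Epb q1 (faK _ hCB q1 q1B); have := hsep q1 q1B.
    rewrite /c /Ep; move=> h1 /andP[h2 h3] /andP[h4 h5]; apply/andP; split; lra.
  have [g [hg gE]] := @act_const R S Sigma V X u x0 y0 c hSigma hXc hu Xx0 Xy0 hc.
  have [g' [hg' g'E]] : exists f, simple_act Sigma X f /\ forall q, fa_prob Sigma q ->
      sint q (u \o f) = u x0 + (u y0 - u x0) * (1 - c).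
    by apply: act_const => //; move: hc => /andP[? ?]; apply/andP; split; lra.
  case: Hp => Hp.
  + have [f [hf fE]] := @act_atomic R S Sigma V X u x0 y0 I B v hSigma hXc hu Xx0 Xy0 hpart hv01.
    have hBfg : prB f g.
      apply/(hBiff f g hf hg) => q Kq; rewrite (fE q (faK _ hCB q Kq)) (gE q (faK _ hCB q Kq)).
      have := hsep q Kq; rewrite -/(Ep p) -/(Ep q) => h.
      have : D * c < D * Ep q by rewrite ltr_pM2l // /c; lra.
      rewrite /D; lra.
    have [hm _] := (hHPiff f g hf hg).1 (hmc f g hf hg hBfg).
    have [q0 q0C [e0 _]] := minE_attain hCHP CHPne (finr g hg).
    have [_ _ [_ hle]] := minE_attain hCHP CHPne (finr f hf).
    have := hle p Hp; move: hm; rewrite e0 (gE q0 (faK _ hCHP q0 q0C)) (fE p fap).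
    have : D * Ep p < D * c by rewrite ltr_pM2l // /c; lra.
    rewrite /D -/(Ep p); lra.
  + have [f [hf fE]] := @act_flip R S Sigma V X u x0 y0 I B v hSigma hXc hu Xx0 Xy0 hpart hv01.
    have hBfg : prB g' f.
      apply/(hBiff g' f hg' hf) => q Kq; rewrite (fE q (faK _ hCB q Kq)) (g'E q (faK _ hCB q Kq)).
      have := hsep q Kq; rewrite -/(Ep p) -/(Ep q) => h.
      have : D * c < D * Ep q by rewrite ltr_pM2l // /c; lra.
      rewrite /D; lra.
    have [_ hm] := (hHPiff g' f hg' hf).1 (hmc g' f hg' hf hBfg).
    have [q0 q0D [e0 _]] := maxE_attain hDHP DHPne (finr g' hg').
    have [_ _ [_ hle]] := maxE_attain hDHP DHPne (finr f hf).
    have := hle p Hp; move: hm; rewrite e0 (g'E q0 (faK _ hDHP q0 q0D)) (fE p fap).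
    have : D * Ep p < D * c by rewrite ltr_pM2l // /c; lra.
    rewrite /D -/(Ep p); lra.
-
  move=> hsub f g hf hg prBfg.
  have hlt := (hBiff f g hf hg).1 prBfg.
  apply/(hHPiff f g hf hg); split.
  + have [q1 q1C [e1 _]] := minE_attain hCHP CHPne (finr f hf).
    have [_ _ [_ hle]] := minE_attain hCHP CHPne (finr g hg).
    rewrite e1; apply: le_lt_trans (hle q1 q1C) _; apply: hlt; apply: hsub; by left.
  + have [q1 q1D [e1 _]] := maxE_attain hDHP DHPne (finr g hg).
    have [_ _ [_ hle]] := maxE_attain hDHP DHPne (finr f hf).
    rewrite e1; apply: lt_le_trans (hle q1 q1D); apply: hlt; apply: hsub; by right.
-
  move=> hmc; split => p Hp; apply: contrapT => npT.
  + have fap : fa_prob Sigma p by exact: faK hCHP p Hp.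
    have [I [B [v [d [hpart hv01 d0 hsep]]]]] := separation hSigma hCT CTne fap npT.
    pose Ep q := \sum_i v i * q (B i).
    have Epb : forall q, fa_prob Sigma q -> 0 <= Ep q <= 1.
      by move=> q fq; exact: (Ep_bounds hSigma fq hpart hv01).
    pose c := Ep p + d / 2.
    have hc : 0 <= c <= 1.
      have := Epb p fap; have := Epb r' (faK _ hCT r' r'C); have := hsep r' r'C.
      rewrite /c /Ep; move=> h1 /andP[h2 h3] /andP[h4 h5]; apply/andP; split; lra.
    have [g [hg gE]] := @act_const R S Sigma V X u x0 y0 c hSigma hXc hu Xx0 Xy0 hc.
    have [f [hf fE]] := @act_atomic R S Sigma V X u x0 y0 I B v hSigma hXc hu Xx0 Xy0 hpart hv01.
    have hTfg : prT f g.
      apply/(hTiff f g hf hg).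
      have [q0 q0C [e0 _]] := minE_attain hCT CTne (finr f hf).
      have [q2 q2D [e2 _]] := maxE_attain hDT DTne (finr g hg).
      rewrite e0 e2 (fE q0 (faK _ hCT q0 q0C)) (gE q2 (faK _ hDT q2 q2D)).
      have := hsep q0 q0C; rewrite -/(Ep p) -/(Ep q0) => h.
      have : D * c < D * Ep q0 by rewrite ltr_pM2l // /c; lra.
      rewrite /D; lra.
    have [hm _] := (hHPiff f g hf hg).1 (hmc f g hf hg hTfg).
    have [q0 q0C [e0 _]] := minE_attain hCHP CHPne (finr g hg).
    have [_ _ [_ hle]] := minE_attain hCHP CHPne (finr f hf).
    have := hle p Hp; move: hm; rewrite e0 (gE q0 (faK _ hCHP q0 q0C)) (fE p fap).
    have : D * Ep p < D * c by rewrite ltr_pM2l // /c; lra.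
    rewrite /D -/(Ep p); lra.
  + have fap : fa_prob Sigma p by exact: faK hDHP p Hp.
    have [I [B [v [d [hpart hv01 d0 hsep]]]]] := separation hSigma hDT DTne fap npT.
    pose Ep q := \sum_i v i * q (B i).
    have Epb : forall q, fa_prob Sigma q -> 0 <= Ep q <= 1.
      by move=> q fq; exact: (Ep_bounds hSigma fq hpart hv01).
    pose c := Ep p + d / 2.
    have hc : 0 <= c <= 1.
      have := Epb p fap; have := Epb r' (faK _ hDT r' r'D); have := hsep r' r'D.
      rewrite /c /Ep; move=> h1 /andP[h2 h3] /andP[h4 h5]; apply/andP; split; lra.
    have [g' [hg' g'E]] : exists f, simple_act Sigma X f /\ forall q, fa_prob Sigma q ->
        sint q (u \o f) = u x0 + (u y0 - u x0) * (1 - c).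
      by apply: act_const => //; move: hc => /andP[? ?]; apply/andP; split; lra.
    have [f [hf fE]] := @act_flip R S Sigma V X u x0 y0 I B v hSigma hXc hu Xx0 Xy0 hpart hv01.
    have hTfg : prT g' f.
      apply/(hTiff g' f hg' hf).
      have [q0 q0C [e0 _]] := minE_attain hCT CTne (finr g' hg').
      have [q2 q2D [e2 _]] := maxE_attain hDT DTne (finr f hf).
      rewrite e0 e2 (fE q2 (faK _ hDT q2 q2D)) (g'E q0 (faK _ hCT q0 q0C)).
      have := hsep q2 q2D; rewrite -/(Ep p) -/(Ep q2) => h.
      have : D * c < D * Ep q2 by rewrite ltr_pM2l // /c; lra.
      rewrite /D; lra.
    have [_ hm] := (hHPiff g' f hg' hf).1 (hmc g' f hg' hf hTfg).
    have [q0 q0D [e0 _]] := maxE_attain hDHP DHPne (finr g' hg').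
    have [_ _ [_ hle]] := maxE_attain hDHP DHPne (finr f hf).
    have := hle p Hp; move: hm; rewrite e0 (g'E q0 (faK _ hDHP q0 q0D)) (fE p fap).
    have : D * Ep p < D * c by rewrite ltr_pM2l // /c; lra.
    rewrite /D -/(Ep p); lra.
-
  move=> [hC hD] f g hf hg prTfg.
  have hlt := (hTiff f g hf hg).1 prTfg.
  have [_ _ [_ hCTle]] := minE_attain hCT CTne (finr f hf).
  have [_ _ [_ hDTle]] := maxE_attain hDT DTne (finr g hg).
  apply/(hHPiff f g hf hg); split.
  + have [q1 q1C [e1 _]] := minE_attain hCHP CHPne (finr f hf).
    have [_ _ [_ hle]] := minE_attain hCHP CHPne (finr g hg).
    rewrite e1; apply: le_lt_trans (hle r rC) _.
    apply: le_lt_trans (hDTle r (hD r rD)) _.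
    apply: lt_le_trans hlt _; exact: hCTle (hC q1 q1C).
  + have [q1 q1D [e1 _]] := maxE_attain hDHP DHPne (finr g hg).
    have [_ _ [_ hle]] := maxE_attain hDHP DHPne (finr f hf).
    rewrite e1; apply: le_lt_trans (hDTle q1 (hD q1 q1D)) _.
    apply: lt_le_trans hlt _; apply: le_trans (hle r rD).
    exact: hCTle (hC r rC).
Qed.
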